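(* Let $0<y\le1$. For all $z=u+iv$ with $v>0$ and $1-\sqrt y\le|u|\le1+\sqrt y$, $$|z+ys_y(z)|\ge\frac{1}{1+\sqrt y}.$$
   Context: $s_y(z)$ is the Stieltjes transform of the symmetrized Marchenko–Pastur law with parameter $y$, i.e. $s_y(z)=\frac{-(z+\frac{y-1}{z})+\sqrt{(z+\frac{y-1}{z})^2-4y}}{2y}$ with the branch of the square root chosen so that $\operatorname{Im}s_y(z)>0$; it is the solution with positive imaginary part of $ys^2+(z+\frac{y-1}{z})s+1=0$. *)

(* Defs.v *)
(* Complex numbers are modelled by an arbitrary
   numClosedFieldType C (e.g. the complex numbers); 'Re, 'Im, `|.|, sqrtC
   are the library notions. *)
From HB Require Import structures.
From mathcomp Require Import all_boot all_order all_algebra.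
Set Implicit Arguments. Unset Strict Implicit. Unset Printing Implicit Defensive.
Import Order.TTheory GRing.Theory Num.Theory.
Local Open Scope ring_scope.

(* is_sy y z s : s = s_y(z), the Stieltjes transform of the symmetrized
   Marchenko-Pastur law: the solution with positive imaginary part of
   y s^2 + (z + (y-1)/z) s + 1 = 0. *)
Definition is_sy (C : numClosedFieldType) (y z s : C) : Prop :=
  0 < 'Im s /\ y * s ^+ 2 + (z + (y - 1) / z) * s + 1 = 0.

(* Main.v *)
Require Import Defs.
From HB Require Import structures.
From mathcomp Require Import all_boot all_order all_algebra.
From mathcomp Require Import ring lra.
Set Implicit Arguments. Unset Strict Implicit. Unset Printing Implicit Defensive.
Import Order.TTheory GRing.Theory Num.Theory.
Local Open Scope ring_scope.
Definition RC (C : numClosedFieldType) := {x : C | x \is Num.real}.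
HB.instance Definition _ (C : numClosedFieldType) := [isSub for (@sval C _ : RC C -> C)].
HB.instance Definition _ (C : numClosedFieldType) := [Choice of RC C by <:].
HB.instance Definition _ (C : numClosedFieldType) := [SubChoice_isSubIntegralDomain of RC C by <:].
HB.instance Definition _ (C : numClosedFieldType) := [SubIntegralDomain_isSubField of RC C by <:].

Definition RCle (C : numClosedFieldType) (x y : RC C) := (val x <= val y).
Definition RClt (C : numClosedFieldType) (x y : RC C) := (val x < val y).
Lemma RCnorm_real (C : numClosedFieldType) (x : RC C) : `|val x| \is Num.real.
Proof. by rewrite realE normr_ge0. Qed.
Definition RCnorm (C : numClosedFieldType) (x : RC C) : RC C :=
  Sub `|val x| (RCnorm_real x).

Lemma RC_le0_add (C : numClosedFieldType) (x y : RC C) : RCle 0 x -> RCle 0 y -> RCle 0 (x + y).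
Proof. rewrite /RCle /=; exact: addr_ge0. Qed.
Lemma RC_le0_mul (C : numClosedFieldType) (x y : RC C) : RCle 0 x -> RCle 0 y -> RCle 0 (x * y).
Proof. rewrite /RCle /=; exact: mulr_ge0. Qed.
Lemma RC_le0_anti (C : numClosedFieldType) (x : RC C) : RCle 0 x -> RCle x 0 -> x = 0.
Proof. rewrite /RCle /= => h1 h2; apply: val_inj => /=; apply/eqP; rewrite eq_le h1 h2 //. Qed.
Lemma RC_sub_ge0 (C : numClosedFieldType) (x y : RC C) : RCle 0 (y - x) = RCle x y.
Proof. by rewrite /RCle /= subr_ge0. Qed.
Lemma RC_le0_total (C : numClosedFieldType) (x : RC C) : RCle 0 x || RCle x 0.
Proof. rewrite /RCle /=; have := valP x; by rewrite realE. Qed.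
Lemma RC_normN (C : numClosedFieldType) (x : RC C) : RCnorm (- x) = RCnorm x.
Proof. by apply: val_inj; rewrite /= normrN. Qed.
Lemma RC_ge0_norm (C : numClosedFieldType) (x : RC C) : RCle 0 x -> RCnorm x = x.
Proof. by rewrite /RCle => h; apply: val_inj; rewrite /= ger0_norm. Qed.
Lemma RC_lt_def (C : numClosedFieldType) (x y : RC C) : RClt x y = (y != x) && RCle x y.
Proof. by rewrite /RClt /RCle lt_def. Qed.

HB.instance Definition _ (C : numClosedFieldType) := Num.IntegralDomain_isLeReal.Build (RC C)
  (@RC_le0_add C) (@RC_le0_mul C) (@RC_le0_anti C) (@RC_sub_ge0 C) (@RC_le0_total C)
  (@RC_normN C) (@RC_ge0_norm C) (@RC_lt_def C).

Lemma RC_leE (C : numClosedFieldType) (x y : RC C) : (x <= y) = (val x <= val y).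
Proof. by []. Qed.
Lemma RC_ltE (C : numClosedFieldType) (x y : RC C) : (x < y) = (val x < val y).
Proof. by []. Qed.
Lemma psi_pos (R : realFieldType) (s d t : R) : 0 < s -> s < 1 -> 0 <= d -> d * (1 + s) <= s ^+ 2 ->
  t = 1 - s + d ->
  0 < t ^+ 2 * s ^+ 2 * (2 + s) ^+ 2 * (2 + 2 * s + s ^+ 2) ^+ 2
     - (1 - s) * (1 + s) ^+ 2 * (2 + 2 * s + s ^+ 2) ^+ 2 * (1 + s - t) ^+ 2 * (t - 1 + s)
     - (1 - s) ^+ 2 * (1 + s) ^+ 2 * s ^+ 2 * (2 + s) ^+ 2 * (1 + s + t) ^+ 2.
Proof.
move=> s0 s1 d0 d1 ht.
set P0 := s ^+ 4 * (1 - s) ^+ 2 * (16 + 32 * s + 24 * s ^+ 2 + 8 * s ^+ 3 + s ^+ 4).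
set P1 := s ^+ 4 * (1 - s) * (20 + 28 * s + 8 * s ^+ 2 - 4 * s ^+ 3 - 2 * s ^+ 4).
set P2 := s * (16 + 60 * s + 92 * s ^+ 2 + 75 * s ^+ 3 + 20 * s ^+ 4 - 18 * s ^+ 5 - 16 * s ^+ 6 - 4 * s ^+ 7).
set P3 := - ((1 - s) * (4 + 16 * s + 28 * s ^+ 2 + 28 * s ^+ 3 + 17 * s ^+ 4 + 6 * s ^+ 5 + s ^+ 6)).
have -> : t ^+ 2 * s ^+ 2 * (2 + s) ^+ 2 * (2 + 2 * s + s ^+ 2) ^+ 2
     - (1 - s) * (1 + s) ^+ 2 * (2 + 2 * s + s ^+ 2) ^+ 2 * (1 + s - t) ^+ 2 * (t - 1 + s)
     - (1 - s) ^+ 2 * (1 + s) ^+ 2 * s ^+ 2 * (2 + s) ^+ 2 * (1 + s + t) ^+ 2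
   = P0 + d * P1 + d ^+ 2 * (P2 + d * P3).
  by rewrite ht /P0 /P1 /P2 /P3; ring.
have sp : 0 < 1 - s by lra.
have hs2 : s ^+ 2 <= s by nra.
have hs3 : s ^+ 3 <= s ^+ 2 by rewrite exprS; nra.
have hs4 : s ^+ 4 <= s ^+ 3 by rewrite (exprS _ 3); nra.
have hs5 : s ^+ 5 <= s ^+ 4 by rewrite (exprS _ 4); nra.
have hs6 : s ^+ 6 <= s ^+ 5 by rewrite (exprS _ 5); nra.
have hs7 : s ^+ 7 <= s ^+ 6 by rewrite (exprS _ 6); nra.
have hs8 : s ^+ 8 <= s ^+ 7 by rewrite (exprS _ 7); nra.
have g2 : 0 <= s ^+ 2 by apply: sqr_ge0.
have g3 : 0 <= s ^+ 3 by apply: exprn_ge0; lra.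
have g4 : 0 <= s ^+ 4 by apply: exprn_ge0; lra.
have g5 : 0 <= s ^+ 5 by apply: exprn_ge0; lra.
have g6 : 0 <= s ^+ 6 by apply: exprn_ge0; lra.
have g7 : 0 <= s ^+ 7 by apply: exprn_ge0; lra.
have g8 : 0 <= s ^+ 8 by apply: exprn_ge0; lra.
have hP0 : 0 < P0.
  rewrite /P0; apply: mulr_gt0; last by lra.
  apply: mulr_gt0; [apply: exprn_gt0 | apply: exprn_gt0]; lra.
have hP1 : 0 <= P1.
  rewrite /P1; apply: mulr_ge0; last by lra.
  apply: mulr_ge0; [apply: exprn_ge0 | ]; lra.
have hP3 : P3 <= 0.
  rewrite /P3 oppr_le0; apply: mulr_ge0; lra.
have hP23 : 0 <= P2 + d * P3.
  have q : 0 <= (1 + s) * P2 + s ^+ 2 * P3.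
    have -> : (1 + s) * P2 + s ^+ 2 * P3 = s * (16 + 72 * s + 140 * s ^+ 2 + 155 * s ^+ 3 + 95 * s ^+ 4
       + 13 * s ^+ 5 - 23 * s ^+ 6 - 15 * s ^+ 7 - 3 * s ^+ 8) by rewrite /P2 /P3; ring.
    apply: mulr_ge0; lra.
  have q2 : s ^+ 2 * P3 <= (d * (1 + s)) * P3 by apply: ler_wnM2r.
  have q3 : 0 <= (1 + s) * (P2 + d * P3) by lra.
  by rewrite pmulr_rge0 in q3; lra.
have : 0 <= d * P1 by apply: mulr_ge0.
have : 0 <= d ^+ 2 * (P2 + d * P3) by apply: mulr_ge0; [apply: sqr_ge0|].
lra.
Qed.

Lemma core (R : realFieldType) (s u v a b : R) :
  0 < s -> s <= 1 -> (1 - s) ^+ 2 <= u ^+ 2 -> 0 < v -> v < a ->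
  (b ^+ 2 - a ^+ 2) * u - 2 * a * b * v - b * (u ^+ 2 - v ^+ 2 + (1 - s ^+ 2)) + 2 * a * u * v + u = 0 ->
  (b ^+ 2 - a ^+ 2) * v + 2 * a * b * u - a * (u ^+ 2 - v ^+ 2 + (1 - s ^+ 2)) - 2 * b * u * v + v = 0 ->
  1 <= (a ^+ 2 + b ^+ 2) * (1 + s) ^+ 2.
Proof.
move=> s0 s1 hu v0 va hX hY.
set c := 1 - s ^+ 2.
set e := (1 - s) ^+ 2.
set K := a ^+ 2 + b ^+ 2.
set m := u ^+ 2 + v ^+ 2.
set X := (b ^+ 2 - a ^+ 2) * u - 2 * a * b * v - b * (u ^+ 2 - v ^+ 2 + c) + 2 * a * u * v + u in hX.
set Y := (b ^+ 2 - a ^+ 2) * v + 2 * a * b * u - a * (u ^+ 2 - v ^+ 2 + c) - 2 * b * u * v + v in hY.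
have E1 : a * (1 - K) * m = v * (c - m) * K.
  apply/eqP; rewrite -subr_eq0.
  have -> : a * (1 - K) * m - v * (c - m) * K = X * (b * v + a * u) - Y * (b * u - a * v).
    by rewrite /X /Y /K /m; ring.
  by rewrite hX hY !mul0r subrr.
have E2 : b * (1 + K) * m = u * (m + c) * K.
  apply/eqP; rewrite -subr_eq0.
  have -> : b * (1 + K) * m - u * (m + c) * K = X * (b * u - a * v) + Y * (b * v + a * u).
    by rewrite /X /Y /K /m; ring.
  by rewrite hX hY !mul0r addr0.
rewrite leNgt; apply/negP => hK.
have K0 : 0 < K by rewrite /K; nra.
have q1 : 1 <= (1 + s) ^+ 2 by nra.
have K1 : K < 1 by nra.
have m0 : 0 < m by rewrite /m; nra.
have me : e <= m by rewrite /m /e; have := sqr_ge0 v; lra.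
have hcm : m < c * K.
  have h1 : v * (1 - K) * m < a * (1 - K) * m.
    by rewrite -!mulrA ltr_pM2r // mulr_gt0 //; lra.
  rewrite E1 in h1.
  have h2 : (1 - K) * m < (c - m) * K.
    by rewrite -!mulrA ltr_pM2l // in h1; rewrite mulrA.
  nra.
have sl1 : s < 1.
  rewrite lt_neqAle s1 andbT; apply/negP => /eqP s_1.
  move: hcm; rewrite /c s_1 expr1n subrr mul0r; lra.
have E4 : m ^+ 2 * (1 - K) ^+ 2 * (1 + K) ^+ 2
   = K * ((1 + K) ^+ 2 * v ^+ 2 * (c - m) ^+ 2 + (1 - K) ^+ 2 * u ^+ 2 * (m + c) ^+ 2).
  apply: (mulfI (lt0r_neq0 K0)).
  have -> : K * (m ^+ 2 * (1 - K) ^+ 2 * (1 + K) ^+ 2)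
     = (1 + K) ^+ 2 * (a * (1 - K) * m) ^+ 2 + (1 - K) ^+ 2 * (b * (1 + K) * m) ^+ 2.
    by rewrite /K; ring.
  by rewrite E1 E2; ring.
have H6 : m ^+ 2 * (1 - K) ^+ 2 * (1 + K) ^+ 2
   <= K * (1 + K) ^+ 2 * ((c - m) ^+ 2 * (m - e)) + K * (1 - K) ^+ 2 * (e * (m + c) ^+ 2).
  rewrite E4.
  have Dn : (1 - K) ^+ 2 * (m + c) ^+ 2 - (1 + K) ^+ 2 * (c - m) ^+ 2 <= 0.
    have -> : (1 - K) ^+ 2 * (m + c) ^+ 2 - (1 + K) ^+ 2 * (c - m) ^+ 2
       = 4 * ((m - K * c) * (c - K * m)) by ring.
    rewrite pmulr_rle0 //; apply: mulr_le0_ge0; first by lra.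
    have : 0 < (1 - K) * m by apply: mulr_gt0; lra.
    have : 0 <= c * (1 - K) by apply: mulr_ge0; rewrite /c; nra.
    lra.
  have hv2 : v ^+ 2 = m - u ^+ 2 by rewrite /m; ring.
  have : u ^+ 2 * ((1 - K) ^+ 2 * (m + c) ^+ 2 - (1 + K) ^+ 2 * (c - m) ^+ 2)
      <= e * ((1 - K) ^+ 2 * (m + c) ^+ 2 - (1 + K) ^+ 2 * (c - m) ^+ 2).
    by apply: ler_wnM2r.
  rewrite hv2 => h.
  rewrite -subr_ge0.
  have -> : K * (1 + K) ^+ 2 * ((c - m) ^+ 2 * (m - e)) + K * (1 - K) ^+ 2 * (e * (m + c) ^+ 2) -
    K * ((1 + K) ^+ 2 * (m - u ^+ 2) * (c - m) ^+ 2 + (1 - K) ^+ 2 * u ^+ 2 * (m + c) ^+ 2)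
    = K * (e * ((1 - K) ^+ 2 * (m + c) ^+ 2 - (1 + K) ^+ 2 * (c - m) ^+ 2)
       - u ^+ 2 * ((1 - K) ^+ 2 * (m + c) ^+ 2 - (1 + K) ^+ 2 * (c - m) ^+ 2)) by ring.
  apply: mulr_ge0; lra.
set q := (1 + s) ^+ 2.
have hKq : K * q < 1 := hK.
have hq1 : 1 <= q := q1.
have al : K * (q - 1) ^+ 2 <= q * (1 - K) ^+ 2.
  rewrite -subr_ge0.
  have -> : q * (1 - K) ^+ 2 - K * (q - 1) ^+ 2 = (q - K) * (1 - K * q) by ring.
  apply: mulr_ge0; lra.
have be : K * (q + 1) ^+ 2 <= q * (1 + K) ^+ 2.
  rewrite -subr_ge0.
  have -> : q * (1 + K) ^+ 2 - K * (q + 1) ^+ 2 = (q - K) * (1 - K * q) by ring.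
  apply: mulr_ge0; lra.
set A1 := (c - m) ^+ 2 * (m - e).
set B1 := e * (m + c) ^+ 2.
have A10 : 0 <= A1 by rewrite /A1; apply: mulr_ge0; [apply: sqr_ge0|lra].
have B10 : 0 <= B1 by rewrite /B1; apply: mulr_ge0; apply: sqr_ge0.
have T0 : 0 <= q * (q + 1) ^+ 2 * A1 + q * (q - 1) ^+ 2 * B1 - m ^+ 2 * (q - 1) ^+ 2 * (q + 1) ^+ 2.
  have P : 0 < (1 - K) ^+ 2 * (1 + K) ^+ 2 by apply: mulr_gt0; apply: exprn_gt0; lra.
  rewrite -(pmulr_rge0 _ P).
  have i1 : (q + 1) ^+ 2 * A1 * (K * (q - 1) ^+ 2) * (1 + K) ^+ 2
         <= (q + 1) ^+ 2 * A1 * (q * (1 - K) ^+ 2) * (1 + K) ^+ 2.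
    apply: ler_wpM2r; first by apply: sqr_ge0.
    apply: ler_wpM2l => //; apply: mulr_ge0 => //; apply: sqr_ge0.
  have i2 : (q - 1) ^+ 2 * B1 * (K * (q + 1) ^+ 2) * (1 - K) ^+ 2
         <= (q - 1) ^+ 2 * B1 * (q * (1 + K) ^+ 2) * (1 - K) ^+ 2.
    apply: ler_wpM2r; first by apply: sqr_ge0.
    apply: ler_wpM2l => //; apply: mulr_ge0 => //; apply: sqr_ge0.
  have i3 : 0 <= (q - 1) ^+ 2 * (q + 1) ^+ 2 * (K * (1 + K) ^+ 2 * A1 + K * (1 - K) ^+ 2 * B1
                 - m ^+ 2 * (1 - K) ^+ 2 * (1 + K) ^+ 2).
    apply: mulr_ge0; first by apply: mulr_ge0; apply: sqr_ge0.
    by rewrite subr_ge0.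
  have -> : (1 - K) ^+ 2 * (1 + K) ^+ 2 * (q * (q + 1) ^+ 2 * A1 + q * (q - 1) ^+ 2 * B1 - m ^+ 2 * (q - 1) ^+ 2 * (q + 1) ^+ 2)
     = (q + 1) ^+ 2 * A1 * (q * (1 - K) ^+ 2) * (1 + K) ^+ 2 + (q - 1) ^+ 2 * B1 * (q * (1 + K) ^+ 2) * (1 - K) ^+ 2
       - m ^+ 2 * (1 - K) ^+ 2 * (1 + K) ^+ 2 * (q - 1) ^+ 2 * (q + 1) ^+ 2 by ring.
  have e3 : (q - 1) ^+ 2 * (q + 1) ^+ 2 * (K * (1 + K) ^+ 2 * A1 + K * (1 - K) ^+ 2 * B1
                 - m ^+ 2 * (1 - K) ^+ 2 * (1 + K) ^+ 2)
     = (q + 1) ^+ 2 * A1 * (K * (q - 1) ^+ 2) * (1 + K) ^+ 2 + (q - 1) ^+ 2 * B1 * (K * (q + 1) ^+ 2) * (1 - K) ^+ 2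
       - m ^+ 2 * (1 - K) ^+ 2 * (1 + K) ^+ 2 * (q - 1) ^+ 2 * (q + 1) ^+ 2 by ring.
  rewrite e3 in i3.
  lra.
have sp : 0 < 1 - s by lra.
set d := m / (1 - s) - (1 - s).
have md : m = (1 - s) * (1 - s + d) by rewrite /d; field; lra.
have d0 : 0 <= d.
  have : e <= (1 - s) * (1 - s + d) by rewrite -md.
  rewrite /e expr2 => h. rewrite ler_pM2l // in h. lra.
have d1 : d * (1 + s) <= s ^+ 2.
  have h1 : m * q < c by nra.
  rewrite md /q /c in h1.
  have h2 : (1 - s) * ((1 - s + d) * (1 + s) ^+ 2) < (1 - s) * (1 + s) by
    rewrite mulrA; have -> : (1 - s) * (1 + s) = 1 - s ^+ 2 by ring.
  rewrite ltr_pM2l // in h2.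
  nra.
have := psi_pos s0 sl1 d0 d1 (erefl (1 - s + d)).
have -> : (1 - s + d) ^+ 2 * s ^+ 2 * (2 + s) ^+ 2 * (2 + 2 * s + s ^+ 2) ^+ 2 -
    (1 - s) * (1 + s) ^+ 2 * (2 + 2 * s + s ^+ 2) ^+ 2 * (1 + s - (1 - s + d)) ^+ 2 * (1 - s + d - 1 + s) -
    (1 - s) ^+ 2 * (1 + s) ^+ 2 * s ^+ 2 * (2 + s) ^+ 2 * (1 + s + (1 - s + d)) ^+ 2
  = - ((q * (q + 1) ^+ 2 * A1 + q * (q - 1) ^+ 2 * B1 - m ^+ 2 * (q - 1) ^+ 2 * (q + 1) ^+ 2) / (1 - s) ^+ 2).
  rewrite /A1 /B1 /q /e /c md; field; lra.
rewrite oppr_gt0 pmulr_llt0 ?invr_gt0 ?exprn_gt0 //; lra.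
Qed.

Unset Implicit Arguments. Set Strict Implicit. Set Printing Implicit Defensive.

Theorem mainTheorem12 (C : numClosedFieldType) (y z s : C)
  (hy0 : 0 < y) (hy1 : y <= 1)
  (hv : 0 < 'Im z)
  (hu1 : 1 - sqrtC y <= `|'Re z|) (hu2 : `|'Re z| <= 1 + sqrtC y)
  (hs : is_sy y z s) :
  1 / (1 + sqrtC y) <= `|z + y * s|.
Proof.
case: hs => hIs hQ.
have yr : y \is Num.real by apply: gtr0_real.
set s0 := sqrtC y.
have s0r : s0 \is Num.real by apply: sqrtC_real; exact: ltW.
have ys0 : y = s0 ^+ 2 by rewrite /s0 sqrtCK.
have z0 : z != 0 by apply: contraTneq hv => ->; rewrite raddf0 ltxx.
set w := z + y * s.
have hP : z * w ^+ 2 - z ^+ 2 * w - (1 - y) * w + z = 0.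
  have -> : z * w ^+ 2 - z ^+ 2 * w - (1 - y) * w + z
     = y * z * (y * s ^+ 2 + (z + (y - 1) / z) * s + 1).
    by rewrite /w; field.
  by rewrite hQ mulr0.
have hva : 'Im z < 'Im w.
  by rewrite /w raddfD /= ImMl // ltrDl mulr_gt0.
clearbody w.
have cr : 1 - y \is Num.real by rewrite rpredB // real1.
have hRe : 'Re (z * w ^+ 2 - z ^+ 2 * w - (1 - y) * w + z) = 'Re 0 by rewrite hP.
have hIm : 'Im (z * w ^+ 2 - z ^+ 2 * w - (1 - y) * w + z) = 'Im 0 by rewrite hP.
rewrite ?raddfD ?raddfB ?raddfN /= ?expr2 ?ReM ?ImM ?ReM ?ImM in hRe hIm.
rewrite ?raddfD ?raddfB ?raddfN /= ?(Creal_ReP _ yr) ?(Creal_ImP _ yr) ?(Creal_ReP _ (@real1 _)) ?(Creal_ImP _ (@real1 _)) in hRe hIm.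
rewrite ?raddf0 in hRe hIm.
set u := 'Re z in hRe hIm hu1 hu2.
set v := 'Im z in hRe hIm hv hva.
set a := 'Im w in hRe hIm hva.
set b := 'Re w in hRe hIm.
have hX : (b ^+ 2 - a ^+ 2) * u - 2 * a * b * v - b * (u ^+ 2 - v ^+ 2 + (1 - s0 ^+ 2)) + 2 * a * u * v + u = 0.
  by rewrite -[RHS]hRe -ys0; ring.
have hY : (b ^+ 2 - a ^+ 2) * v + 2 * a * b * u - a * (u ^+ 2 - v ^+ 2 + (1 - s0 ^+ 2)) - 2 * b * u * v + v = 0.
  by rewrite -[RHS]hIm -ys0; ring.
have s0pos : 0 < s0 by rewrite /s0 sqrtC_gt0.
have s0le1 : s0 <= 1.
  by rewrite /s0 -sqrtC1 ler_sqrtC // nnegrE ?ler01 // ltW.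
pose S : RC C := Sub s0 s0r.
pose U : RC C := Sub u (Creal_Re z).
pose V : RC C := Sub v (Creal_Im z).
pose A : RC C := Sub a (Creal_Im w).
pose B : RC C := Sub b (Creal_Re w).
have nr : `|w| \is Num.real by rewrite realE normr_ge0.
pose N : RC C := Sub `|w| nr.
have S0 : 0 < S := s0pos.
have S1 : S <= 1 := s0le1.
have hU : 1 - S <= `|U| := hu1.
have V0 : 0 < V := hv.
have VA : V < A := hva.
have XR : (B ^+ 2 - A ^+ 2) * U - 2 * A * B * V - B * (U ^+ 2 - V ^+ 2 + (1 - S ^+ 2)) + 2 * A * U * V + U = 0.
  by apply: val_inj; exact: hX.
have YR : (B ^+ 2 - A ^+ 2) * V + 2 * A * B * U - A * (U ^+ 2 - V ^+ 2 + (1 - S ^+ 2)) - 2 * B * U * V + V = 0.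
  by apply: val_inj; exact: hY.
have NR : N ^+ 2 = A ^+ 2 + B ^+ 2.
  apply: val_inj; change (`|w| ^+ 2 = 'Im w ^+ 2 + 'Re w ^+ 2); by rewrite normC2_Re_Im addrC.
have N0 : 0 <= N := normr_ge0 w.
have hu' : (1 - S) ^+ 2 <= U ^+ 2.
  rewrite -(real_normK (num_real U)).
  have : 0 <= 1 - S by lra.
  nra.
have := core S0 S1 hu' V0 VA XR YR.
rewrite -NR => hc.
have fin : 1 / (1 + S) <= N.
  rewrite ler_pdivrMr; last by lra.
  have hp : 0 <= N * (1 + S) by apply: mulr_ge0; lra.
  have e : N ^+ 2 * (1 + S) ^+ 2 = (N * (1 + S)) ^+ 2 by ring.
  rewrite e in hc.
  move: hp hc; set P := N * (1 + S) => hp hc.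
  nra.
exact: fin.
Qed.
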